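(* Let $(X,T)$ be a CAM $G$-system and let $(Y,S)$ be a topological factor of $(X,T)$, i.e. there is a continuous surjection $\pi\colon X\to Y$ with $\pi\circ T_g=S_g\circ\pi$ for all $g\in G$. If the action $S$ of $G$ on $Y$ is faithful, then $(Y,S)$ is CAM. In particular, if $G=\mathbb{Z}$ and $Y$ is infinite, then $(Y,S)$ is a CAM $\mathbb{Z}$-system.
   Context: Let $G$ be a countable discrete group. A topological $G$-system $(X,T)$ consists of a compact metric space $X$ and an action $T\colon G\to\mathrm{Homeo}(X)$, $g\mapsto T_g$. The system is topologically transitive if for all nonempty open $U,V\subseteq X$ there is $g\in G$ with $T_gU\cap V\neq\emptyset$; the action is faithful if $T_g=\mathrm{id}_X$ only when $g$ is the identity. A point is periodic if its $G$-orbit is finite. The system is chaotic almost minimal (CAM) if: (1) it is topologically transitive and the action is faithful; (2) the periodic points are dense in $X$; (3) every proper closed $T$-invariant subset of $X$ is finite. *)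

(* Defs.v *)
From HB Require Import structures.
From mathcomp Require Import all_boot all_order all_algebra.
From mathcomp Require Import all_classical all_reals all_analysis.
Set Implicit Arguments. Unset Strict Implicit. Unset Printing Implicit Defensive.
Import Order.TTheory GRing.Theory Num.Theory.
Local Open Scope classical_set_scope.

Record cgroup := CGroup {
  gcarrier :> countType;
  gmul : gcarrier -> gcarrier -> gcarrier;
  gone : gcarrier;
  ginv : gcarrier -> gcarrier;
  gmulA : forall a b c, gmul a (gmul b c) = gmul (gmul a b) c;
  gmul1 : forall a, gmul gone a = a;
  gmulV : forall a, gmul (ginv a) a = gone }.

Definition int_cgroup : cgroup :=
  @CGroup int (fun a b => (a + b)%R) 0%R (fun a => (- a)%R)
    (fun a b c => addrA a b c) (fun a => add0r a) (fun a => addNr a).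

Definition compact_metric (R : realType) (X : pseudoMetricType R) : Prop :=
  compact [set: X] /\ hausdorff_space X.

(* T : G -> X -> X is an action by homeomorphisms (a group homomorphism
   G -> Homeo(X)); each T g is then a homeomorphism with inverse T g^-1. *)
Definition is_action (G : cgroup) (X : topologicalType) (T : G -> X -> X) : Prop :=
  [/\ forall g, continuous (T g),
      T (gone G) = id &
      forall g h, T (gmul g h) = T g \o T h].

Definition top_transitive (G : cgroup) (X : topologicalType) (T : G -> X -> X) :=
  forall U V : set X, open U -> open V -> U !=set0 -> V !=set0 ->
    exists g, (T g @` U) `&` V !=set0.

Definition faithful_action (G : cgroup) (X : Type) (T : G -> X -> X) :=
  forall g, T g = id -> g = gone G.

Definition periodic_point (G : cgroup) (X : Type) (T : G -> X -> X) (x : X) :=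
  finite_set (range (fun g => T g x)).

Definition invariant_set (G : cgroup) (X : Type) (T : G -> X -> X) (A : set X) :=
  forall g, T g @` A `<=` A.

Definition CAM (G : cgroup) (X : topologicalType) (T : G -> X -> X) : Prop :=
  [/\ top_transitive T /\ faithful_action T,
      dense (periodic_point T) &
      forall A : set X, closed A -> invariant_set T A -> A <> [set: X] ->
        finite_set A].

Definition factor_map (G : cgroup) (X Y : topologicalType)
  (T : G -> X -> X) (S : G -> Y -> Y) (pi : X -> Y) : Prop :=
  [/\ continuous pi, (forall y : Y, exists x : X, pi x = y) &
      forall g, pi \o T g = S g \o pi].

(* Main.v *)
Require Import Defs.
From mathcomp Require Import all_boot all_order all_algebra.
From mathcomp Require Import all_classical all_reals all_analysis.
Import GRing.Theory Num.Theory.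
Local Open Scope classical_set_scope.

Section Aux.
Variables (G : cgroup) (X Y : topologicalType) (T : G -> X -> X) (S : G -> Y -> Y) (pi : X -> Y).

Lemma fac_trans : top_transitive T -> factor_map T S pi -> top_transitive S.
Proof.
move=> tr [cpi surj comm] U V oU oV [u Uu] [v Vv].
have [xu xuE] := surj u; have [xv xvE] := surj v; subst u v.
have [g [y [[x Ux <-] Vy]]] := tr (pi @^-1` U) (pi @^-1` V)
  (open_comp (fun z _ => cpi z) oU) (open_comp (fun z _ => cpi z) oV)
  (ex_intro _ xu Uu) (ex_intro _ xv Vv).
exists g; exists (pi (T g x)); split => //.
exists (pi x) => //.
by have := congr1 (fun f => f x) (comm g) => /= ->.
Qed.

Lemma fac_CAM : CAM T -> factor_map T S pi -> faithful_action S -> CAM S.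
Proof.
move=> [[tr _] dP cl] fm fa; have [cpi surj comm] := fm.
have commx g x : pi (T g x) = S g (pi x).
  by have := congr1 (fun f => f x) (comm g).
split.
  by split => //; apply: fac_trans.
  move=> W [w Ww] oW.
  have [xo xoE] := surj w; subst w.
  have [x [Wx Px]] := dP (pi @^-1` W) (ex_intro _ xo Ww)
    (open_comp (fun z _ => cpi z) oW).
  exists (pi x); split => //.
  rewrite /periodic_point.
  have -> : range (fun g => S g (pi x)) = pi @` range (fun g => T g x).
    apply/seteqP; split => y.
      by move=> [g _ <-]; exists (T g x); [by exists g | by rewrite commx].
    by move=> [z [g _ <-] <-]; exists g => //; rewrite commx.
  exact: finite_image.
move=> A cA iA nA.
  have fin : finite_set (pi @^-1` A).
    apply: cl.
    + exact: preimage_closed (fun z _ => cpi z) cA.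
    + move=> g y [x Ax <-] /=; rewrite commx; apply: (iA g); by exists (pi x).
    + move=> e; apply: nA; apply/seteqP; split => // y _.
      have [x <-] := surj y.
      have : [set: X] x by [].
      by rewrite -e.
  have -> : A = pi @` (pi @^-1` A).
    apply/seteqP; split => y.
      by move=> Ay; have [x px] := surj y; exists x => //=; rewrite px.
    by move=> [x Ax <-].
  exact: finite_image.
Qed.
End Aux.

Lemma int_period (Y : Type) (S : int -> Y -> Y) (N : nat) :
  (forall a b : int, S (a + b)%R = S a \o S b) -> (0 < N)%N ->
  S (Posz N) = id -> forall g : int, exists j : 'I_N, S g = S (Posz j).
Proof.
move=> Sadd N0 SN.
have SkN k : S (Posz (k * N)) = id.
  elim: k => [|k IH]; first by rewrite mul0n -SN -(add0r (Posz N)) Sadd SN.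
  by rewrite mulSn PoszD Sadd SN IH.
have pos m : exists j : 'I_N, S (Posz m) = S (Posz j).
  exists (Ordinal (ltn_pmod m N0)) => /=.
  by rewrite {1}(divn_eq m N) PoszD addrC Sadd SkN.
case=> [m|m]; first exact: pos.
have [j hj] := pos (m.+1 * N - m.+1)%N.
exists j; rewrite -hj.
have le : (m.+1 <= m.+1 * N)%N by rewrite leq_pmulr.
rewrite -subzn // -[LHS]/(S (Negz m) \o id) -(SkN m.+1) -Sadd.
by rewrite NegzE addrC.
Qed.

Theorem proposition2p6 (R : realType) :
  (forall (G : cgroup) (X Y : pseudoMetricType R)
     (T : G -> X -> X) (S : G -> Y -> Y) (pi : X -> Y),
     compact_metric X -> compact_metric Y ->
     is_action T -> is_action S ->
     CAM T -> factor_map T S pi ->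
     faithful_action S -> CAM S) /\
  (forall (X Y : pseudoMetricType R)
     (T : int_cgroup -> X -> X) (S : int_cgroup -> Y -> Y) (pi : X -> Y),
     compact_metric X -> compact_metric Y ->
     is_action T -> is_action S ->
     CAM T -> factor_map T S pi ->
     infinite_set [set: Y] -> CAM S).
Proof.
split.
  by move=> G X Y T S pi _ _ _ _ c f fa; exact: fac_CAM c f fa.
move=> X Y T S pi _ [_ hY] _ aS c f inf.
have [[trT _] _ _] := c.
have tr := @fac_trans _ _ _ T S pi trT f.
apply: fac_CAM c f _.
have [Scont S0 Sadd'] := aS.
have Sadd : forall a b : int, S (a + b)%R = S a \o S b := Sadd'.
move=> n Sn.
case: (eqVneq n 0%R) => // nn0; exfalso.
have [N [N0 SN]] : exists N : nat, (0 < N)%N /\ S (Posz N) = id.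
  case: n Sn nn0 => [m|m] Sn nn0.
    by exists m; split => //; rewrite lt0n; apply: contraNneq nn0 => ->.
  exists m.+1; split => //.
  have := Sadd (Posz m.+1) (Negz m); rewrite Sn NegzE addrN => E.
  by rewrite -[LHS]/(S (Posz m.+1) \o id) -E; exact: S0.
have per := @int_period _ S N Sadd N0 SN.
have [y _] := infinite_setN0 inf.
pose F := [set S (Posz (nat_of_ord j)) y | j in [set: 'I_N]].
have finF : finite_set F by apply: finite_image; apply: finite_finset.
have [z Fz] : exists z, ~ F z.
  apply: contrapT => H; apply: inf; apply: sub_finite_set finF => z _.
  by apply: contrapT => nz; apply: H; exists z.
have sep (j : 'I_N) : exists AB : set Y * set Y,
    [/\ nbhs (S (Posz j) y) AB.1, nbhs z AB.2 & AB.1 `&` AB.2 = set0].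
  apply: contrapT => H; apply: Fz; exists j => //.
  apply: hY => A B nA nB; apply: contrapT => ne; apply: H.
  exists (A, B); split => //; apply/eqP; apply: contrapT => /negP.
  by rewrite set0P.
have [AB hAB] := choice sep.
have nU : nbhs y [set u | forall j : 'I_N, (AB j).1 (S (Posz j) u)].
  apply: (filter_forall (f := fun j u => (AB j).1 (S (Posz j) u))) => j.
  have [h1 _ _] := hAB j.
  exact: (Scont j y _ h1).
have nV : nbhs z [set v | forall j : 'I_N, (AB j).2 v].
  apply: (filter_forall (f := fun j v => (AB j).2 v)) => j.
  by have [_ h2 _] := hAB j.
move: nU nV; rewrite !nbhsE => -[U [oU Uy] sU] [V [oV Vz] sV].
have [g [x [[u Uu <-] Vx]]] := tr U V oU oV (ex_intro _ y Uy) (ex_intro _ z Vz).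
have [j hj] := per g.
have [_ _ h3] := hAB j.
have : ((AB j).1 `&` (AB j).2) (S (Posz j) u).
  by split; [exact: sU | rewrite -hj; exact: sV].
by rewrite h3.
Qed.
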